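(* Let $\mathcal{C}$ be a binary linear LRC code of length $n$, locality $r$ and minimum distance $d$. Then $$\dim(\mathcal{C})\le\min_{1\le s\le n/(r+1)}\big(sr+\log_2M(n-s(r+1),d,r)\big),$$ where $M(m,d,r)$ is the maximum cardinality of a binary linear LRC code of length $m$, minimum distance $d$ and locality $r$. Consequently, $$R^{(\mathrm{lin})}(r,\delta)\le\min_{0\le\sigma<1/(r+1)}\Big\{\sigma r+(1-\sigma(r+1))\,R^{(\mathrm{lin})}\Big(r,\frac{\delta}{1-\sigma(r+1)}\Big)\Big\}.$$
   Context: A binary code $\mathcal{C}\subseteq\{0,1\}^n$ is an LRC code with locality $r$ if every coordinate $i\in[n]$ is contained in a subset $\mathcal{R}_i\subseteq[n]$ of size $r+1$ such that for some function $\phi_i:\{0,1\}^r\to\{0,1\}$, $c_i=\phi_i(c_{j_1},\dots,c_{j_r})$ for every codeword $c$, where $j_1<\dots<j_r$ are the elements of $\mathcal{R}_i\setminus\{i\}$. Let $M^{(\mathrm{lin})}(n,r,d)$ be the maximum cardinality of a binary linear code of length $n$, minimum Hamming distance $d$ and locality $r$, and $R^{(\mathrm{lin})}(r,\delta)=\limsup_{n\to\infty}\frac1n\log_2M^{(\mathrm{lin})}(n,r,\delta n)$. *)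

(* Defs.v *)
From HB Require Import structures.
From mathcomp Require Import all_boot all_order all_algebra.
From mathcomp Require Import all_classical all_reals all_analysis.
Set Implicit Arguments. Unset Strict Implicit. Unset Printing Implicit Defensive.
Import Order.TTheory GRing.Theory Num.Theory.
Local Open Scope ring_scope.

Notation word n := 'rV['F_2]_n.

Definition hamming n (x y : word n) : nat := #|[set i : 'I_n | x 0 i != y 0 i]|.

Definition is_linear_code n (C : {set word n}) : bool :=
  (0 \in C) && [forall x in C, forall y in C, forall a : 'F_2, (a *: x + y) \in C].

Definition code_dim n (C : {set word n}) : nat := \dim (<<enum C>>%VS).

Definition min_dist_ge (R : realType) n (C : {set word n}) (t : R) : bool :=
  [forall x in C, forall y in C, (x != y) ==> (t <= (hamming x y)%:R)].

(* Locality r: every coordinate i lies in a recovery set R_i (of size at most r+1) such that c_i = phi_i (c_{j_1}, ..., c_{j_k}) for all codewords c,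
   where j_1 < ... < j_k enumerate R_i \ {i} (enum on ordinals is increasing). *)
Definition has_locality n (C : {set word n}) (r : nat) : Prop :=
  forall i : 'I_n, exists (Ri : {set 'I_n}) (phi : seq 'F_2 -> 'F_2),
    [/\ i \in Ri, (#|Ri| <= r.+1)%N &
        forall c, c \in C -> c 0 i = phi [seq c 0 j | j <- enum (Ri :\ i)]].

Definition Mlin (R : realType) (n r : nat) (t : R) : nat :=
  \max_(C : {set word n} |
          `[< is_linear_code C /\ has_locality C r /\ min_dist_ge C t >]) #|C|.

Definition log2 (R : realType) (x : R) : R := ln x / ln 2.

Definition Rlin (R : realType) (r : nat) (delta : R) : \bar R :=
  limn_esup (fun n : nat => (log2 (Mlin n r (delta * n%:R))%:R / n%:R)%:E).

(* Main.v *)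
Require Import Defs.
From HB Require Import structures.
From mathcomp Require Import all_boot all_order all_algebra all_field.
From mathcomp Require Import all_classical all_reals all_analysis.
From mathcomp Require Import zify ring lra.
From Stdlib Require Import Lia.
Import Order.TTheory GRing.Theory Num.Theory.
Set Implicit Arguments. Unset Strict Implicit. Unset Printing Implicit Defensive.
Local Open Scope ring_scope.


Section Comb.
Variable n : nat.
Implicit Types C : {set 'rV['F_2]_n}.

Lemma lin_comb C (x y : 'rV['F_2]_n) (a : 'F_2) :
  is_linear_code C -> x \in C -> y \in C -> a *: x + y \in C.
Proof.
move=> /andP[_ /forall_inP H] xC yC.
exact: (forallP (forall_inP (H x xC) y yC) a).
Qed.

Lemma lin0 C : is_linear_code C -> 0 \in C.
Proof. by case/andP. Qed.

Lemma lin_sub C x y : is_linear_code C -> x \in C -> y \in C -> x - y \in C.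
Proof.
move=> L xC yC.
have ny : - y \in C.
  by have := lin_comb (-1) L yC (lin0 L); rewrite addr0 scaleN1r.
by have := lin_comb 1 L xC ny; rewrite scale1r.
Qed.

Lemma fiber_bound (K : finType) (A B : {set 'rV['F_2]_n}) (f : 'rV['F_2]_n -> K) :
  (forall x y, x \in A -> y \in A -> f x = f y -> x - y \in B) ->
  (#|A| <= #|K| * #|B|)%N.
Proof.
move=> H.
rewrite -sum1_card (partition_big f predT) //= -sum_nat_const leq_sum // => k _.
rewrite sum1_card.
case: (pickP [pred x in A | f x == k]) => [x0 /andP[x0A /eqP fx0]|none].
  rewrite -(card_imset _ (addIr (- x0))).
  apply: subset_leq_card; apply/fintype.subsetP => _ /imsetP[x /andP[xA /eqP fx] ->].
  by apply: H => //; rewrite fx fx0.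
rewrite (eq_card0 (A := [pred i in A | f i == k])) //.
Qed.

Definition Qdet C (K S : {set 'I_n}) := forall c c', c \in C -> c' \in C ->
  (forall k, k \in K -> c 0 k = c' 0 k) -> forall k, k \in S -> c 0 k = c' 0 k.

Lemma greedy C r : has_locality C r -> forall j, (j * r.+1 <= n)%N ->
  exists S K : {set 'I_n}, [/\ (#|S| <= j * r.+1)%N, (#|K| + j <= #|S|)%N & Qdet C K S].
Proof.
move=> loc; elim=> [_|j IH Hj].
  exists finset.set0, finset.set0; split; rewrite ?cards0 //.
  by move=> c c' _ _ _ k; rewrite inE.
have [|S [K [HS HK HQ]]] := IH; first by apply: leq_trans Hj; rewrite leq_mul2r leqnSn orbT.
have : (0 < #|~: S|)%N.
  have := cardsC S; rewrite card_ord => e.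
  have : (#|S| < n)%N by apply: leq_trans Hj; apply: leq_ltn_trans HS _; rewrite mulSn; lia.
  lia.
case/card_gt0P => i; rewrite inE => iS.
have [Ri [phi [iRi cRi Hphi]]] := loc i.
exists (S :|: Ri), (K :|: (Ri :\: S :\ i)); split.
- rewrite cardsU mulSn.
  have := cardsD Ri S; have := subset_leq_card (subsetIr S Ri).
  have := subset_leq_card (subsetIl S Ri). lia.
- have e1 := cardsU S Ri; have e2 := cardsD Ri S.
  have e3 := cardsD1 i (Ri :\: S). rewrite inE iS iRi /= in e3.
  have e4 := cardsU K (Ri :\: S :\ i).
  rewrite finset.setIC in e2.
  have := subset_leq_card (subsetIr S Ri). rewrite e4 e1 => h. move: (#|S :&: Ri|) (#|Ri|) (#|S|) (#|K|) (#|Ri :\: S|) (#|Ri :\: S :\ i|) (#|K :&: (Ri :\: S :\ i)|) e2 e3 h HK => a b c d e f g. lia.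
- move=> c c' cC c'C agree k.
  have agK : forall k, k \in K -> c 0 k = c' 0 k.
    by move=> k' k'K; apply: agree; rewrite inE k'K.
  have agS := HQ c c' cC c'C agK.
  rewrite inE => /orP[kS|kRi]; first exact: agS.
  case: (boolP (k \in S)) => kS; first exact: agS.
  case: (eqVneq k i) => [->|ki]; last by apply: agree; rewrite !inE ki kRi kS orbT.
  rewrite (Hphi c cC) (Hphi c' c'C); congr phi; apply/eq_in_map => j0.
  rewrite mem_enum !inE => /andP[ji jRi].
  case: (boolP (j0 \in S)) => jS; first exact: agS.
  by apply: agree; rewrite !inE ji jRi jS orbT.
Qed.

Lemma pad C k : forall S K, Qdet C K S -> (#|S| + k <= n)%N ->
  exists S' K' : {set 'I_n}, [/\ #|S'| = (#|S| + k)%N, (#|K'| <= #|K| + k)%N & Qdet C K' S'].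
Proof.
elim: k => [|k IH] S K HQ Hk.
  by exists S, K; rewrite !addn0.
have : (0 < #|~: S|)%N by have := cardsC S; rewrite card_ord; lia.
case/card_gt0P => x; rewrite inE => xS.
have Q1 : Qdet C (x |: K) (x |: S).
  move=> c c' cC c'C ag j; rewrite !inE => /orP[/eqP->|jS].
    by apply: ag; rewrite !inE eqxx.
  by apply: (HQ c c' cC c'C) => // k' k'K; apply: ag; rewrite inE k'K orbT.
have [|S' [K' [e1 e2 e3]]] := IH _ _ Q1; first by rewrite cardsU1 xS; lia.
exists S', K'; split => //; first by rewrite e1 cardsU1 xS; lia.
by apply: leq_trans e2 _; rewrite cardsU1; case: (x \notin K); lia.
Qed.

Section Shorten.
Local Open Scope ring_scope.
Variables (R : realType) (m : nat) (S : {set 'I_n}) (g : 'I_m -> 'I_n).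
Hypotheses (ginj : injective g) (gsurj : forall j, j \notin S -> exists k, g k = j)
  (gS : forall k, g k \notin S).

Definition punct (c : 'rV['F_2]_n) : 'rV['F_2]_m := \row_k c 0 (g k).

Lemma shorten C r (t : R) : is_linear_code C -> has_locality C r -> min_dist_ge C t ->
  (#|[set c in C | [forall j in S, c 0%R j == 0%R]]| <= Mlin m r t)%N.
Proof.
move=> L loc md.
set D := [set c in C | [forall j in S, c 0 j == 0]].
have DC c : c \in D -> c \in C by rewrite inE => /andP[].
have DS c j : c \in D -> j \in S -> c 0 j = 0.
  by rewrite inE => /andP[_ /forall_inP H] /H /eqP.
have pinj : {in D &, injective punct}.
  move=> x y xD yD /rowP e; apply/rowP => j.
  case: (boolP (j \in S)) => jS; first by rewrite (DS x j) // (DS y j).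
  have [k <-] := gsurj jS; have := e k; by rewrite !mxE.
rewrite -(card_in_imset pinj).
rewrite /Mlin; apply: leq_bigmax_cond.
apply/asboolP; split; [|split].
- apply/andP; split.
    apply/imsetP; exists 0.
      by rewrite inE lin0 //=; apply/forall_inP => j _; rewrite mxE.
    by apply/rowP => k; rewrite !mxE.
  apply/forall_inP => _ /imsetP[x xD ->]; apply/forall_inP => _ /imsetP[y yD ->].
  apply/forallP => a; apply/imsetP; exists (a *: x + y).
    rewrite inE lin_comb ?DC //=; apply/forall_inP => j jS.
    by rewrite !mxE (DS x j) // (DS y j) // mulr0 addr0.
  by apply/rowP => k; rewrite !mxE.
- move=> k; have [Ri [phi [iRi cRi Hphi]]] := loc (g k).
  set Rk := [set k' | g k' \in Ri].
  set E := enum (Rk :\ k).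
  exists Rk, (fun l => phi [seq (if j \in S then 0 else nth 0 l (index j (map g E))) | j <- enum (Ri :\ g k)]).
  split; first by rewrite inE.
    apply: leq_trans cRi; rewrite -(card_imset _ ginj); apply: subset_leq_card.
    by apply/fintype.subsetP => _ /imsetP[k' + ->]; rewrite inE.
  move=> _ /imsetP[c cD ->]; rewrite mxE (Hphi c (DC c cD)); congr phi.
  apply/eq_in_map => j; rewrite mem_enum !inE => /andP[jk jRi].
  case: (boolP (j \in S)) => jS; first by rewrite (DS c j).
  have [k' gk'] := gsurj jS.
  have jin : j \in map g E.
    apply/mapP; exists k' => //; rewrite mem_enum !inE gk' jRi andbT.
    by apply: contra jk => /eqP <-; rewrite gk'.
  have hi : (index j (map g E) < size E)%N by rewrite -(size_map g) index_mem.
  by rewrite (nth_map k) // mxE -(nth_map k (g k) g hi) nth_index.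
- apply/forall_inP => _ /imsetP[x xD ->]; apply/forall_inP => _ /imsetP[y yD ->].
  apply/implyP => pxy.
  have xy : x != y by apply: contra pxy => /eqP ->.
  have := forall_inP (forall_inP md x (DC x xD)) y (DC y yD).
  move/implyP/(_ xy)/le_trans; apply; rewrite ler_nat /hamming.
  apply: leq_trans (leq_imset_card g _); apply: subset_leq_card.
  apply/fintype.subsetP => j; rewrite inE => xyj.
  have jS : j \notin S by apply: contraNN xyj => jS; rewrite (DS x j) // (DS y j).
  have [k gkj] := gsurj jS; apply/imsetP; exists k; last by [].
  by rewrite inE !mxE gkj.
Qed.
End Shorten.
End Comb.

Lemma main_count (R : realType) n r (t : R) (C : {set 'rV['F_2]_n}) s :
  is_linear_code C -> has_locality C r -> min_dist_ge C t -> (s * r.+1 <= n)%N ->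
  (#|C| <= 2 ^ (s * r) * Mlin (n - s * r.+1) r t)%N.
Proof.
move=> L loc md Hs.
have [S0 [K0 [HS HK HQ]]] := greedy loc Hs.
have [|S [K [eS eK HQ']]] := pad (k := s * r.+1 - #|S0|) HQ; first lia.
have Hm : #|~: S| = (n - s * r.+1)%N by have := cardsC S; rewrite card_ord; lia.
pose g (k : 'I_(n - s * r.+1)) : 'I_n := enum_val (cast_ord (esym Hm) k).
have ginj : injective g by move=> a b /enum_val_inj /cast_ord_inj.
have gS k : g k \notin S by have := enum_valP (cast_ord (esym Hm) k); rewrite inE.
have gsurj j : j \notin S -> exists k, g k = j.
  move=> jS; have Hj : j \in ~: S by rewrite inE.
  by exists (cast_ord Hm (enum_rank_in Hj j)); rewrite /g cast_ordK enum_rankK_in.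
apply: leq_trans (fiber_bound (f := fun c : 'rV['F_2]_n => [ffun k : 'I_#|K| => c 0%R (enum_val k)])
   (A := C) (B := [set c in C | [forall j in S, c 0%R j == 0%R]]) _) _.
  move=> x y xC yC fxy; rewrite inE lin_sub //=; apply/forall_inP => j jS.
  rewrite !mxE (HQ' x y xC yC _ j jS) ?subrr // => k kK.
  by move/ffunP/(_ (enum_rank_in kK k)): fxy; rewrite !ffunE enum_rankK_in.
rewrite card_ffun card_Fp // card_ord; apply: leq_mul.
  by apply: leq_pexp2l => //; lia.
exact: (shorten ginj gsurj L loc md).
Qed.

Lemma card_code n (C : {set 'rV['F_2]_n}) : is_linear_code C -> #|C| = (2 ^ code_dim C)%N.
Proof.
move=> L; rewrite /code_dim.
have -> : (2 ^ \dim <<enum C>> = #|<<enum C>>%VS|)%N by rewrite card_vspace card_Fp.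
apply: eq_card => x; apply/idP/idP => [xC|].
  by apply: memv_span; rewrite mem_enum.
move=> xin; have -> := coord_span (X := in_tuple (enum C)) xin.
apply: (big_ind (fun v => v \in C)); first exact: lin0.
  by move=> u v uC vC; have := lin_comb 1 L uC vC; rewrite scale1r.
move=> i _; rewrite -[X in X \in C]addr0; apply: lin_comb L _ (lin0 L).
by rewrite -mem_enum; apply: mem_nth; have := ltn_ord i.
Qed.

Lemma log2_bound (R : realType) (a b M : nat) : (0 < M)%N -> (2 ^ a <= 2 ^ b * M)%N ->
  (a%:R : R) <= b%:R + log2 (M%:R : R).
Proof.
move=> M0 H; rewrite /log2.
have l2 : 0 < ln (2 : R) by apply: ln_gt0; rewrite ltr1n.
rewrite -(ler_pM2r l2) mulrDl divfK ?gt_eqF //.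
have p2a : (0 < 2 ^ a)%N by rewrite expn_gt0.
have p2b : (0 < 2 ^ b)%N by rewrite expn_gt0.
have : ln ((2 ^ a)%:R : R) <= ln ((2 ^ b * M)%:R).
  rewrite ler_ln ?posrE ?ltr0n ?muln_gt0 ?p2a ?p2b ?M0 //.
  by rewrite ler_nat.
rewrite natrM.
have hb : ((2 ^ b)%:R : R) \in Num.pos by rewrite posrE ltr0n.
have hM : (M%:R : R) \in Num.pos by rewrite posrE ltr0n.
rewrite (lnM hb hM) (natrX _ 2 a) (natrX _ 2 b).
have h2 : (0 : R) < 2 by rewrite ltr0n.
rewrite (lnXn a h2) (lnXn b h2) -(mulr_natl (ln 2) a) -(mulr_natl (ln 2) b).
by [].
Qed.


Lemma part1 (R : realType) (n r d : nat) (C : {set 'rV['F_2]_n}) :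
     is_linear_code C -> has_locality C r -> min_dist_ge C (d%:R : R) ->
     forall s : nat, (1 <= s)%N -> (s * r.+1 <= n)%N ->
       ((code_dim C)%:R : R) <= (s * r)%:R + log2 (Mlin (n - s * r.+1) r (d%:R : R))%:R.
Proof.
move=> L loc md s _ Hs; have H := main_count L loc md Hs; rewrite card_code // in H.
have M0 : (0 < Mlin (n - s * r.+1) r (d%:R : R))%N.
  rewrite lt0n; apply/negP => /eqP M0.
  by move: H; rewrite M0 muln0 leqn0 expn_eq0.
exact: log2_bound M0 H.
Qed.


Lemma test (R : realType) (u : nat -> R) (x : \bar R) : (limn_esup (fun n => (u n)%:E) < x)%E -> exists N, forall n, (N <= n)%N -> ((u n)%:E < x)%E.
Proof.
rewrite /limn_esup limf_esupE => /ereal_inf_lt[_ [V HV <-] Hx].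
case: HV => N _ HN. exists N => n Nn.
apply: le_lt_trans Hx; apply: ereal_sup_ubound; exists n => //; exact: HN.
Qed.

Lemma test2 (R : realType) (u : nat -> R) (x : \bar R) N : (forall n, (N <= n)%N -> ((u n)%:E <= x)%E) -> (limn_esup (fun n => (u n)%:E) <= x)%E.
Proof.
move=> H; rewrite /limn_esup limf_esupE.
apply: le_trans (ereal_inf_lbound _) _.
  by exists (fun n : nat => (N <= n)%N) => //; exists N.
by apply: ge_ereal_sup => _ [k kN <-]; exact: H.
Qed.

Lemma Mlin_pos (R : realType) m r (t : R) : (0 < Mlin m r t)%N.
Proof.
rewrite /Mlin; apply: (@leq_trans #|finset.set1 (0 : 'rV['F_2]_m)|); first by rewrite cards1.
apply: leq_bigmax_cond.
apply/asboolP; split; [|split].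
- apply/andP; split; first by rewrite inE.
  apply/forall_inP => x; rewrite inE => /eqP ->; apply/forall_inP => y; rewrite inE => /eqP ->.
  by apply/forallP => a; rewrite inE scaler0 addr0.
- move=> i; exists (finset.set1 i), (fun _ => 0); split; rewrite ?inE ?cards1 //.
  by move=> c; rewrite inE => /eqP ->; rewrite mxE.
- apply/forall_inP => x; rewrite inE => /eqP ->; apply/forall_inP => y; rewrite inE => /eqP ->.
  by rewrite eqxx.
Qed.

Lemma Mlin_shorten (R : realType) n r (t : R) s : (s * r.+1 <= n)%N ->
  (Mlin n r t <= 2 ^ (s * r) * Mlin (n - s * r.+1) r t)%N.
Proof. by move=> Hs; apply/bigmax_leqP => C /asboolP [L [loc md]]; exact: main_count. Qed.

Lemma Mlin_mono (R : realType) m r (t1 t2 : R) : (t2 <= t1 \/ t2 <= 0) ->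
  (Mlin m r t1 <= Mlin m r t2)%N.
Proof.
move=> H; apply/bigmax_leqP => C /asboolP [L [loc md]].
apply: leq_bigmax_cond; apply/asboolP; split => //; split => //.
apply/forall_inP => x xC; apply/forall_inP => y yC; apply/implyP => xy.
case: H => H; apply: le_trans H _; last exact: ler0n.
exact: (implyP (forall_inP (forall_inP md x xC) y yC) xy).
Qed.

Lemma log2_mul (R : realType) k M M' : (0 < M)%N -> (M <= 2 ^ k * M')%N ->
  log2 (M%:R : R) <= k%:R + log2 (M'%:R).
Proof.
move=> M0 H.
have M'0 : (0 < M')%N by move: H; case: M' => //; rewrite muln0; lia.
rewrite /log2.
have l2 : 0 < ln (2 : R) by apply: ln_gt0; rewrite ltr1n.
rewrite -(ler_pM2r l2) mulrDl !divfK ?gt_eqF //.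
have p2b : (0 < 2 ^ k)%N by rewrite expn_gt0.
have : ln (M%:R : R) <= ln ((2 ^ k * M')%:R).
  rewrite ler_ln ?posrE ?ltr0n ?muln_gt0 ?p2b ?M0 ?M'0 //.
  by rewrite ler_nat.
rewrite natrM.
have hb : ((2 ^ k)%:R : R) \in Num.pos by rewrite posrE ltr0n.
have hM : (M'%:R : R) \in Num.pos by rewrite posrE ltr0n.
rewrite (lnM hb hM) (natrX _ 2 k).
have h2 : (0 : R) < 2 by rewrite ltr0n.
by rewrite (lnXn k h2) -(mulr_natl (ln 2) k).
Qed.

Lemma log2_ge0 (R : realType) M : (0 < M)%N -> 0 <= log2 (M%:R : R).
Proof.
move=> M0; rewrite /log2 divr_ge0 // ?ln_ge0 ?ler1n //.
Qed.

Lemma core (R : realType) (r : nat) (delta sigma th l eps : R) (N n : nat) :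
  0 <= sigma -> th = 1 - sigma * r.+1%:R -> 0 < th -> th <= 1 -> 0 <= l -> 0 < eps ->
  (forall m, (N <= m)%N -> log2 (Mlin m r (delta / th * m%:R))%:R / m%:R < l + eps) ->
  ((Num.Def.trunc ((N%:R + r.+1%:R) / th + r%:R / eps)).+1 <= n)%N ->
  log2 (Mlin n r (delta * n%:R))%:R / n%:R <= sigma * r%:R + th * l + 2 * eps.
Proof.
move=> s0 thE th0 th1 l0 e0 HN Hn.
set X := (N%:R + r.+1%:R) / th + r%:R / eps.
have A1 : 0 <= (N%:R + r.+1%:R) / th by apply: divr_ge0; [apply: addr_ge0|apply: ltW].
have A2 : 0 <= r%:R / eps by apply: divr_ge0; [|apply: ltW].
have X0 : 0 <= X by apply: addr_ge0.
have nX : X < n%:R.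
  apply: lt_le_trans (truncnS_gt X) _; by rewrite ler_nat.
rewrite /X in nX.
have n1 : N%:R + r.+1%:R < n%:R * th.
  by rewrite -ltr_pdivrMr //; lra.
have n2 : r%:R < n%:R * eps.
  by rewrite -ltr_pdivrMr //; lra.
have n0 : (0 : R) < n%:R by lra.
set s := (Num.Def.trunc (sigma * n%:R)).+1.
have sn0 : 0 <= sigma * n%:R by apply: mulr_ge0.
have s1 : sigma * n%:R < s%:R := truncnS_gt _.
have s2 : s%:R <= sigma * n%:R + 1.
  by rewrite /s -natr1 lerD2r truncn_le.
have r1 : (0 : R) <= r.+1%:R by [].
have p1 := ler_wpM2r r1 s2.
have p2 := ler_wpM2r r1 (ltW s1).
have sR : ((s * r.+1)%:R : R) <= n%:R.
  rewrite natrM; apply: le_trans p1 _.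
  have : sigma * n%:R * r.+1%:R = n%:R * (1 - th) by rewrite thE; ring.
  have := ler0n R N. nra.
have Hs : (s * r.+1 <= n)%N by rewrite -(ler_nat R).
set m := (n - s * r.+1)%N.
have mR : (m%:R : R) = n%:R - (s * r.+1)%:R by rewrite natrB.
have e1 : sigma * n%:R * r.+1%:R = n%:R * (1 - th) by rewrite thE; ring.
have mN' : (N%:R : R) < m%:R by rewrite mR natrM; nra.
have mN : (N <= m)%N by rewrite -(ler_nat R); apply: ltW.
have mth : (m%:R : R) <= th * n%:R by rewrite mR natrM; nra.
have m0 : (0 : R) < m%:R by apply: le_lt_trans mN'.
have H1 := @Mlin_shorten R n r (delta * n%:R) s Hs.
have H2 : (Mlin m r (delta * n%:R) <= Mlin m r (delta / th * m%:R))%N.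
  apply: Mlin_mono; case: (lerP 0 delta) => d0.
    left; have dt : 0 <= delta / th by apply: divr_ge0 => //; apply: ltW.
    apply: le_trans (ler_wpM2l dt mth) _.
    have -> : delta / th * (th * n%:R) = delta * n%:R by field; apply: lt0r_neq0.
    by [].
  right; apply: mulr_le0_ge0; last by [].
  by apply: mulr_le0_ge0; [apply: ltW|rewrite invr_ge0 ltW].
have H3 := @log2_mul R _ _ _ (Mlin_pos n r (delta * n%:R)) (leq_trans H1 (leq_mul (leqnn _) H2)).
have H4 := HN m mN; rewrite ltr_pdivrMr // in H4.
rewrite ler_pdivrMr //.
rewrite natrM in H3.
have p3 : s%:R * r%:R <= (sigma * n%:R + 1) * r%:R by apply: ler_wpM2r.
have le0 : 0 <= l + eps by lra.
have p4 := ler_wpM2l le0 mth.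
have p5 : 0 <= eps * n%:R * (1 - th) by apply: mulr_ge0; [apply: mulr_ge0; lra|lra].
nra.
Qed.

Lemma part2 (R : realType) (r : nat) (delta sigma : R) :
     0 <= sigma -> sigma < 1 / (r.+1)%:R ->
     (Rlin r delta <= (sigma * r%:R)%:E
        + (1 - sigma * (r.+1)%:R)%:E * Rlin r (delta / (1 - sigma * (r.+1)%:R)))%E.
Proof.
move=> s0 slt.
have r0 : (0:R) < r.+1%:R by rewrite ltr0n.
rewrite ltr_pdivlMr // in slt.
set th := 1 - sigma * r.+1%:R.
have th0 : 0 < th by rewrite /th subr_gt0.
have th1 : th <= 1 by rewrite /th; have := mulr_ge0 s0 (ltW r0); lra.
have L0 : (0 <= Rlin r (delta / th))%E.
  rewrite /Rlin /limn_esup; apply: limf_esup_ge0.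
    by move=> [N _ HN]; exact: (HN N (leqnn N)).
  move=> m; rewrite lee_fin divr_ge0 // log2_ge0 //; exact: Mlin_pos.
case E: (Rlin r (delta / th)) L0 => [l| |] // L0; last first.
  by rewrite gt0_muley ?lte_fin // addey // leey.
rewrite lee_fin in L0.
rewrite -EFinM -EFinD; apply/lee_addgt0Pr => e e0; rewrite -EFinD.
set eps := e / 2.
have eps0 : 0 < eps by apply: divr_gt0.
have : (Rlin r (delta / th) < (l + eps)%:E)%E by rewrite E lte_fin ltrDl.
rewrite /Rlin => /test [N HN].
apply: (test2 (N := (Num.Def.trunc ((N%:R + r.+1%:R) / th + r%:R / eps)).+1)) => n Hn.
rewrite lee_fin; apply: le_trans (core (delta := delta) s0 erefl th0 th1 L0 eps0 _ Hn) _.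
  by move=> m Nm; rewrite -lte_fin; exact: HN.
rewrite /eps /th; have -> : 2 * (e / 2) = e :> R by field.
by [].
Qed.

Theorem theorem7 (R : realType) :
  (forall (n r d : nat) (C : {set 'rV['F_2]_n}),
     is_linear_code C -> has_locality C r -> min_dist_ge C (d%:R : R) ->
     forall s : nat, (1 <= s)%N -> (s * r.+1 <= n)%N ->
       ((code_dim C)%:R : R) <= (s * r)%:R + log2 (Mlin (n - s * r.+1) r (d%:R : R))%:R)
  /\
  (forall (r : nat) (delta sigma : R),
     0 <= sigma -> sigma < 1 / (r.+1)%:R ->
     (Rlin r delta <= (sigma * r%:R)%:E
        + (1 - sigma * (r.+1)%:R)%:E * Rlin r (delta / (1 - sigma * (r.+1)%:R)))%E).
Proof.
split; [exact: part1 | exact: part2].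
Qed.
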